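(* Over all 3-periodics of $\mathcal{E}$, the circumcenter $X_3^\dagger$ of the focus-inversive triangle moves on the circle with center and radius \[C_3^\dagger=\left(-c\left(1+\rho^2\frac{a^2+b^2}{2b^4}\right),0\right),\qquad R_3^\dagger=\rho^2\,\frac{a(\delta-b^2)}{2b^4}.\]
   Context: Let $a>b>0$ and let $\mathcal{E}$ be the ellipse $x^2/a^2+y^2/b^2=1$. Set $c=\sqrt{a^2-b^2}$, $\delta=\sqrt{a^4-a^2b^2+b^4}$, and let the foci be $f_1=(-c,0)$, $f_2=(c,0)$. A 3-periodic is a triangle $P_1P_2P_3$ with vertices on $\mathcal{E}$ such that at each vertex the normal to $\mathcal{E}$ bisects the angle formed by the two sides meeting at that vertex; these form a one-parameter family (one through every point of $\mathcal{E}$). Fix $\rho>0$; the focus-inversive triangle has vertices $P_i^\dagger=f_1+(\rho/d_{1,i})^2(P_i-f_1)$, $d_{1,i}=|P_i-f_1|$. *)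

(* Defs.v *)
From Stdlib Require Import Reals.
Open Scope R_scope.

Definition pt := (R * R)%type.

Definition dot (p q : pt) : R := fst p * fst q + snd p * snd q.
Definition sub (p q : pt) : pt := (fst p - fst q, snd p - snd q).
Definition add (p q : pt) : pt := (fst p + fst q, snd p + snd q).
Definition scal (k : R) (p : pt) : pt := (k * fst p, k * snd p).
Definition dist2 (p q : pt) : R := dot (sub p q) (sub p q).
Definition pdist (p q : pt) : R := sqrt (dist2 p q).

Definition on_ellipse (a b : R) (p : pt) : Prop :=
  (fst p)^2 / a^2 + (snd p)^2 / b^2 = 1.

(* an outward normal vector to the ellipse at p (gradient / 2) *)
Definition ell_normal (a b : R) (p : pt) : pt := (fst p / a^2, snd p / b^2).

(* At vertex P with neighbours Q and S, the normal to the ellipse bisects the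
   angle QPS: the normal makes equal angles with the unit vectors along PQ and PS. *)
Definition normal_bisects (a b : R) (P Q S : pt) : Prop :=
  dot (scal (/ pdist Q P) (sub Q P)) (ell_normal a b P)
  = dot (scal (/ pdist S P) (sub S P)) (ell_normal a b P).

Definition noncollinear (P1 P2 P3 : pt) : Prop :=
  (fst P2 - fst P1) * (snd P3 - snd P1) - (snd P2 - snd P1) * (fst P3 - fst P1) <> 0.

Definition three_periodic (a b : R) (P1 P2 P3 : pt) : Prop :=
  on_ellipse a b P1 /\ on_ellipse a b P2 /\ on_ellipse a b P3 /\
  noncollinear P1 P2 P3 /\
  normal_bisects a b P1 P3 P2 /\
  normal_bisects a b P2 P1 P3 /\
  normal_bisects a b P3 P2 P1.

Definition inversion (f : pt) (rho : R) (P : pt) : pt :=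
  add f (scal ((rho / pdist P f)^2) (sub P f)).

Definition is_circumcenter (X Q1 Q2 Q3 : pt) : Prop :=
  pdist X Q1 = pdist X Q2 /\ pdist X Q2 = pdist X Q3.

(* Main.v *)
Require Import Defs.
From Stdlib Require Import Reals.
From Stdlib Require Import Lra Nsatz.
Open Scope R_scope.
Definition ph2 p q X Ys := p*p*(X*X) + q*q*Ys.
Definition ph1 p q be X Ys := p*X*(q*Ys - p*(X*X) - be).
Definition ps1s p q be X Ys := q*q*Ys*((q*Ys - p*(X*X) + be)*(q*Ys - p*(X*X) + be)).
Definition ph0 p q be X Ys := -(q*q*Ys + be*(q*Ys - p*(X*X))).
Definition Txf a c p q be X Ys := 2*a*ph2 p q X Ys - c*ph1 p q be X Ys.
Definition D1f a c p q be X Ys := a*c*c*ph0 p q be X Ys - a*ph2 p q X Ys*(a*a-2*c*c) - c*c*c*ph1 p q be X Ys.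
Definition W64 a b2 c al := 64*c*c*(a*a+b2)*(a*a+b2) - a*a*(2*al*c*c+4*a*a-4*b2)*(2*al*c*c+4*a*a-4*b2).
Definition Fgen a b2 c al p q be X Ys :=
  let Tx := Txf a c p q be X Ys in let D1 := D1f a c p q be X Ys in
  64*(Tx*Tx*b2^4*c*c + ps1s p q be X Ys*a*a*b2^3*c^4 + 2*D1*Tx*(a*a+b2)*b2^2*c*c) + D1*D1*W64 a b2 c al.

Lemma fin_poly a c al X : al <> 0 -> 8*al*(a*a) = c*c*(12+4*al-al*al) ->
  Fgen a (a*a-c*c) c al (al-2) (-al-2) (1-al*al/4) X (1-X*X) = 0.
Proof.
intros Hal Hr.
assert (H: (8*al)^5 * Fgen a (a*a-c*c) c al (al-2) (-al-2) (1-al*al/4) X (1-X*X)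
   = (- 4718592*a^2*c^8*al^5*X^2 + 12582912*a^2*c^8*al^5*X^4 - 8388608*a^2*c^8*al^5*X^6 - 7864320*a^2*c^8*al^6*X^2 + 16777216*a^2*c^8*al^6*X^4 - 8388608*a^2*c^8*al^6*X^6 - 4063232*a^2*c^8*al^7*X^2 + 6291456*a^2*c^8*al^7*X^4 - 2097152*a^2*c^8*al^7*X^6 - 262144*a^2*c^8*al^8*X^2 + 294912*a^2*c^8*al^9*X^2 - 262144*a^2*c^8*al^9*X^4 + 32768*a^2*c^8*al^10*X^2 - 8192*a^2*c^8*al^11*X^2 - 3145728*a^3*c^7*al^5*X + 4194304*a^3*c^7*al^5*X^3 - 4194304*a^3*c^7*al^6*X + 10485760*a^3*c^7*al^6*X^3 - 8388608*a^3*c^7*al^6*X^5 - 786432*a^3*c^7*al^7*X + 2097152*a^3*c^7*al^7*X^3 + 1048576*a^3*c^7*al^8*X - 3145728*a^3*c^7*al^8*X^3 + 2097152*a^3*c^7*al^8*X^5 + 458752*a^3*c^7*al^9*X - 786432*a^3*c^7*al^9*X^3 + 131072*a^3*c^7*al^10*X^3 - 16384*a^3*c^7*al^11*X - 524288*a^4*c^6*al^5 + 18874368*a^4*c^6*al^5*X^2 - 50331648*a^4*c^6*al^5*X^4 + 33554432*a^4*c^6*al^5*X^6 - 524288*a^4*c^6*al^6 + 24117248*a^4*c^6*al^6*X^2 - 41943040*a^4*c^6*al^6*X^4 + 16777216*a^4*c^6*al^6*X^6 + 131072*a^4*c^6*al^7 + 5242880*a^4*c^6*al^7*X^2 - 6291456*a^4*c^6*al^7*X^4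 + 262144*a^4*c^6*al^8 - 2621440*a^4*c^6*al^8*X^2 + 4194304*a^4*c^6*al^8*X^4 + 32768*a^4*c^6*al^9 - 393216*a^4*c^6*al^9*X^2 - 524288*a^4*c^6*al^9*X^4 - 32768*a^4*c^6*al^10 + 196608*a^4*c^6*al^10*X^2 - 8192*a^4*c^6*al^11 + 6291456*a^5*c^5*al^5*X - 8388608*a^5*c^5*al^5*X^3 + 5242880*a^5*c^5*al^6*X - 16777216*a^5*c^5*al^6*X^3 + 16777216*a^5*c^5*al^6*X^5 - 1048576*a^5*c^5*al^7*X + 4194304*a^5*c^5*al^7*X^3 - 8388608*a^5*c^5*al^7*X^5 - 1572864*a^5*c^5*al^8*X + 4194304*a^5*c^5*al^8*X^3 - 131072*a^5*c^5*al^9*X - 524288*a^5*c^5*al^9*X^3 + 65536*a^5*c^5*al^10*X - 18874368*a^6*c^4*al^5*X^2 + 50331648*a^6*c^4*al^5*X^4 - 33554432*a^6*c^4*al^5*X^6 - 12582912*a^6*c^4*al^6*X^2 + 16777216*a^6*c^4*al^6*X^4 + 1048576*a^6*c^4*al^7*X^2 - 4194304*a^6*c^4*al^7*X^4 + 1048576*a^6*c^4*al^8*X^2 - 131072*a^6*c^4*al^9*X^2) * (8*al*(a*a) - c*c*(12+4*al-al*al))).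
{ unfold Fgen, Txf, D1f, W64, ph2, ph1, ps1s, ph0. field. }
rewrite Hr, Rminus_diag, Rmult_0_r in H.
apply Rmult_integral in H; destruct H as [H|H]; auto.
exfalso. assert (H8: 8*al <> 0) by (intro; apply Hal; lra). apply (pow_nonzero _ 5) in H8. contradiction.
Qed.

Lemma E_core wx wy sx sy dx dy t n p q be :
  n = wx*wx+wy*wy -> n*sx = 2*be*wx -> n*sy = 2*be*wy -> n*dx = -wy*t -> n*dy = wx*t ->
  t*t = n*(dx*dx+dy*dy) -> sx*sx+sy*sy+dx*dx+dy*dy = 4 ->
  p*(sx*sx - dx*dx) + q*(sy*sy - dy*dy) = 4*be ->
  n*n*n*(be*be*(p+q)*n - (p*wy*wy + q*wx*wx)*n - be*n*n) = 0.
Proof. intros. nsatz. Qed.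

Lemma E_one p q be X1 Y1 X2 Y2 X3 Y3 :
 X2*X2+Y2*Y2 = 1 -> X3*X3+Y3*Y3=1 ->
 p*X1*X2 + q*Y1*Y2 = be -> p*X1*X3 + q*Y1*Y3 = be -> p*X2*X3 + q*Y2*Y3 = be ->
 (X2-X3)*(X2-X3)+(Y2-Y3)*(Y2-Y3) <> 0 ->
 (p*X1)*(p*X1) + (q*Y1)*(q*Y1) <> 0 ->
 be*be*(p+q) - p*q*(p*(X1*X1)+q*(Y1*Y1)) - be*(p*p*(X1*X1)+q*q*(Y1*Y1)) = 0.
Proof.
intros c2 c3 b12 b13 b23 hd hn.
set (wx := p*X1). set (wy := q*Y1).
set (sx := X2+X3). set (sy := Y2+Y3). set (dx := X2-X3). set (dy := Y2-Y3).
set (n := wx*wx+wy*wy).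
set (t := -wy*dx + wx*dy).
assert (h1 : wx*dx + wy*dy = 0) by (unfold wx,wy,dx,dy; nra).
assert (h2 : wx*sx + wy*sy = 2*be) by (unfold wx,wy,sx,sy; nra).
assert (h3 : sx*dx + sy*dy = 0) by (unfold sx,sy,dx,dy; nra).
assert (ht : t*t = n*(dx*dx+dy*dy)).
{ assert (t*t + (wx*dx+wy*dy)*(wx*dx+wy*dy) = n*(dx*dx+dy*dy)) by (unfold t,n; ring).
  rewrite h1 in H. lra. }
assert (tnz : t <> 0).
{ intro H0. rewrite H0, Rmult_0_r in ht. symmetry in ht. apply Rmult_integral in ht. tauto. }
assert (hu : (-wy*sx + wx*sy) = 0).
{ assert (E: (-wy*sx + wx*sy)*t = n*(sx*dx+sy*dy) - (wx*sx+wy*sy)*(wx*dx+wy*dy)) by (unfold t,n; ring).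
  rewrite h3, h1 in E. rewrite Rmult_0_r, Rmult_0_r, Rminus_0_r in E.
  apply Rmult_integral in E. tauto. }
assert (hsx : n*sx = 2*be*wx).
{ assert (n*sx = wx*(wx*sx+wy*sy) - wy*(-wy*sx + wx*sy)) by (unfold n; ring). rewrite H, h2, hu. ring. }
assert (hsy : n*sy = 2*be*wy).
{ assert (n*sy = wy*(wx*sx+wy*sy) + wx*(-wy*sx + wx*sy)) by (unfold n; ring). rewrite H, h2, hu. ring. }
assert (hdx : n*dx = -wy*t).
{ assert (n*dx = wx*(wx*dx+wy*dy) - wy*t) by (unfold n,t; ring). rewrite H, h1. ring. }
assert (hdy : n*dy = wx*t).
{ assert (n*dy = wy*(wx*dx+wy*dy) + wx*t) by (unfold n,t; ring). rewrite H, h1. ring. }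
assert (h4 : sx*sx+sy*sy+dx*dx+dy*dy = 4) by (unfold sx,sy,dx,dy; nra).
assert (hB : p*(sx*sx - dx*dx) + q*(sy*sy - dy*dy) = 4*be) by (unfold sx,sy,dx,dy; nra).
assert (HH := E_core wx wy sx sy dx dy t n p q be eq_refl hsx hsy hdx hdy ht h4 hB).
assert (nnz : n <> 0) by exact hn.
assert (n*n*n*n <> 0) by (repeat apply Rmult_integral_contrapositive_currified; auto).
apply (Rmult_eq_reg_l (n*n*n*n)); auto. rewrite Rmult_0_r. rewrite <- HH. unfold n, wx, wy. ring.
Qed.
Lemma sq_cases x y : x*x = y*y -> y = x \/ y = -x.
Proof. intro H. assert ((y-x)*(y+x) = 0) by nra. apply Rmult_integral in H0. destruct H0; [left|right]; lra. Qed.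

Lemma degen p q be X1 Y1 X2 Y2 X3 Y3 :
 X1*X1+Y1*Y1 = 1 -> X2*X2+Y2*Y2 = 1 -> X3*X3+Y3*Y3=1 ->
 p*X1*X2 + q*Y1*Y2 = be -> p*X1*X3 + q*Y1*Y3 = be -> p*X2*X3 + q*Y2*Y3 = be ->
 q <> 0 -> X1*X1 = X2*X2 -> X1*X1 = X3*X3 ->
 (X2-X1)*(Y3-Y1) - (Y2-Y1)*(X3-X1) <> 0 -> False.
Proof.
intros c1 c2 c3 b12 b13 b23 hq e2 e3 hN.
assert (f2 : Y1*Y1 = Y2*Y2) by lra. assert (f3 : Y1*Y1 = Y3*Y3) by lra.
destruct (sq_cases _ _ e2) as [-> | ->]; destruct (sq_cases _ _ e3) as [-> | ->];
destruct (sq_cases _ _ f2) as [-> | ->]; destruct (sq_cases _ _ f3) as [-> | ->];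
  try (apply hN; ring);
  (assert (HY : q*(Y1*Y1) = 0) by nra;
   apply Rmult_integral in HY; destruct HY as [HY|HY]; [contradiction|];
   apply Rmult_integral in HY; destruct HY as [HY|HY]; rewrite HY in hN; apply hN; ring).
Qed.

Lemma lin_zero u v w X1 Y1 X2 Y2 X3 Y3 :
  u*X1 + v*Y1 + w = 0 -> u*X2 + v*Y2 + w = 0 -> u*X3 + v*Y3 + w = 0 ->
  (X2-X1)*(Y3-Y1) - (Y2-Y1)*(X3-X1) <> 0 -> u = 0 /\ v = 0 /\ w = 0.
Proof.
intros h1 h2 h3 hN.
assert (Hu : u * ((X2-X1)*(Y3-Y1) - (Y2-Y1)*(X3-X1)) = 0) by nsatz.
assert (Hv : v * ((X2-X1)*(Y3-Y1) - (Y2-Y1)*(X3-X1)) = 0) by nsatz.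
apply Rmult_integral in Hu; apply Rmult_integral in Hv.
destruct Hu as [Hu|Hu]; [|contradiction]; destruct Hv as [Hv|Hv]; [|contradiction].
subst. repeat split; lra.
Qed.


Lemma ssq0 x y : x*x + y*y = 0 -> x = 0 /\ y = 0.
Proof. intro H. assert (0 <= x*x) by nra. assert (0 <= y*y) by nra.
 assert (x*x = 0) by lra. assert (y*y = 0) by lra. split; nra. Qed.

Lemma cayley a b c k X1 Y1 X2 Y2 X3 Y3 :
 0 < c -> 0 < k ->
 X1*X1+Y1*Y1 = 1 -> X2*X2+Y2*Y2 = 1 -> X3*X3+Y3*Y3=1 ->
 (X2-X1)*(Y3-Y1) - (Y2-Y1)*(X3-X1) <> 0 ->
 let al := 2*k*k*(c*c) in let be := 2*k*k*(a*a+b*b) - 2 in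
 (al-2)*X1*X2 + (-al-2)*Y1*Y2 = be -> (al-2)*X1*X3 + (-al-2)*Y1*Y3 = be ->
 (al-2)*X2*X3 + (-al-2)*Y2*Y3 = be ->
 al*al + 4*be - 4 = 0.
Proof.
intros hc hk c1 c2 c3 hN al be b12 b13 b23.
set (p := al-2) in *. set (q := -al-2) in *.
assert (hal : 0 < al) by (unfold al; apply Rmult_lt_0_compat; [nra|nra]).
assert (hq : q <> 0) by (unfold q; lra).
assert (d23 : (X2-X3)*(X2-X3)+(Y2-Y3)*(Y2-Y3) <> 0).
{ intro H. apply ssq0 in H. destruct H. assert (X2 = X3) by lra. assert (Y2 = Y3) by lra. subst. apply hN. ring. }
assert (d13 : (X1-X3)*(X1-X3)+(Y1-Y3)*(Y1-Y3) <> 0).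
{ intro H. apply ssq0 in H. destruct H. assert (X1 = X3) by lra. assert (Y1 = Y3) by lra. subst. apply hN. ring. }
assert (d12 : (X1-X2)*(X1-X2)+(Y1-Y2)*(Y1-Y2) <> 0).
{ intro H. apply ssq0 in H. destruct H. assert (X1 = X2) by lra. assert (Y1 = Y2) by lra. subst. apply hN. ring. }
destruct (Req_dec (al*al + 4*be - 4) 0) as [HG|HG]; [exact HG|exfalso].
(* degenerate w = 0 implies G = 0 *)
assert (Hw : forall X Y X' Y', X*X+Y*Y = 1 -> p*X*X' + q*Y*Y' = be ->
          (p*X)*(p*X) + (q*Y)*(q*Y) <> 0).
{ intros X Y X' Y' cc bb H. apply HG.
  apply ssq0 in H. destruct H as [hpX hqY].
  assert (hY : Y = 0). { apply Rmult_integral in hqY. destruct hqY; [contradiction|auto]. }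
  subst Y. assert (hX: X*X = 1) by lra.
  assert (hp : p = 0) by (rewrite <- (Rmult_1_r p), <- hX, <- Rmult_assoc, hpX; ring).
  assert (hbe : be = 0) by (rewrite <- bb, hp; ring).
  unfold p in hp. rewrite hbe. assert (al = 2) by lra. rewrite H. ring. }
assert (E1 := E_one p q be X1 Y1 X2 Y2 X3 Y3 c2 c3 b12 b13 b23 d23 (Hw _ _ _ _ c1 b12)).
assert (b21 : p*X2*X1 + q*Y2*Y1 = be) by lra.
assert (b31 : p*X3*X1 + q*Y3*Y1 = be) by lra.
assert (b32 : p*X3*X2 + q*Y3*Y2 = be) by lra.
assert (E2 := E_one p q be X2 Y2 X1 Y1 X3 Y3 c1 c3 b21 b23 b13 d13 (Hw _ _ _ _ c2 b21)).
assert (E3 := E_one p q be X3 Y3 X1 Y1 X2 Y2 c1 c2 b31 b32 b12 d12 (Hw _ _ _ _ c3 b31)).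
assert (Hx2 : 2*al*(al*al+4*be-4)*(X1*X1 - X2*X2) = 0).
{ assert (T : 2*al*(al*al+4*be-4)*(X1*X1 - X2*X2) =
   (be*be*(p+q) - p*q*(p*(X1*X1)+q*(Y1*Y1)) - be*(p*p*(X1*X1)+q*q*(Y1*Y1)))
 - (be*be*(p+q) - p*q*(p*(X2*X2)+q*(Y2*Y2)) - be*(p*p*(X2*X2)+q*q*(Y2*Y2)))
 + q*q*(p+be)*((X1*X1+Y1*Y1)-(X2*X2+Y2*Y2))) by (unfold p, q; ring).
  rewrite T, E1, E2, c1, c2. ring. }
assert (Hx3 : 2*al*(al*al+4*be-4)*(X1*X1 - X3*X3) = 0).
{ assert (T : 2*al*(al*al+4*be-4)*(X1*X1 - X3*X3) =
   (be*be*(p+q) - p*q*(p*(X1*X1)+q*(Y1*Y1)) - be*(p*p*(X1*X1)+q*q*(Y1*Y1)))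
 - (be*be*(p+q) - p*q*(p*(X3*X3)+q*(Y3*Y3)) - be*(p*p*(X3*X3)+q*q*(Y3*Y3)))
 + q*q*(p+be)*((X1*X1+Y1*Y1)-(X3*X3+Y3*Y3))) by (unfold p, q; ring).
  rewrite T, E1, E3, c1, c3. ring. }
assert (2*al*(al*al+4*be-4) <> 0) by (apply Rmult_integral_contrapositive_currified; [lra|auto]).
apply Rmult_integral in Hx2; destruct Hx2 as [Hx2|Hx2]; [contradiction|].
apply Rmult_integral in Hx3; destruct Hx3 as [Hx3|Hx3]; [contradiction|].
apply (degen p q be X1 Y1 X2 Y2 X3 Y3); auto; lra.
Qed.


Lemma core_main a b c k X1 Y1 X2 Y2 X3 Y3 m Yx Yy :
 0 < b -> b < a -> 0 < c -> c*c = a*a - b*b -> 0 < k ->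
 X1*X1+Y1*Y1 = 1 -> X2*X2+Y2*Y2 = 1 -> X3*X3+Y3*Y3=1 ->
 (X2-X1)*(Y3-Y1) - (Y2-Y1)*(X3-X1) <> 0 ->
 let al := 2*k*k*(c*c) in let be := 2*k*k*(a*a+b*b) - 2 in
 (al-2)*X1*X2 + (-al-2)*Y1*Y2 = be -> (al-2)*X1*X3 + (-al-2)*Y1*Y3 = be ->
 (al-2)*X2*X3 + (-al-2)*Y2*Y3 = be ->
 m*((a+c*X1)*(a+c*X1)) - 2*((a*X1+c)*Yx + b*Y1*Yy) + 1 = 0 ->
 m*((a+c*X2)*(a+c*X2)) - 2*((a*X2+c)*Yx + b*Y2*Yy) + 1 = 0 ->
 m*((a+c*X3)*(a+c*X3)) - 2*((a*X3+c)*Yx + b*Y3*Yy) + 1 = 0 ->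
 let delta := sqrt (a^4 - a^2*b^2 + b^4) in
 (Yx - (- c * (a^2+b^2)/(2*b^4)))*(Yx - (- c * (a^2+b^2)/(2*b^4))) + Yy*Yy
  = (a*(delta-b^2)/(2*b^4))*(a*(delta-b^2)/(2*b^4)).
Proof.
intros hb hab hc hc2 hk c1 c2 c3 hN al be b12 b13 b23 l1 l2 l3 delta.
assert (HG := cayley a b c k X1 Y1 X2 Y2 X3 Y3 hc hk c1 c2 c3 hN b12 b13 b23).
fold al be in HG.
set (p := al-2) in *. set (q := -al-2) in *.
assert (hal : 0 < al) by (unfold al; apply Rmult_lt_0_compat; [nra|nra]).
assert (hal2 : al < 2).
{ assert (al*al = 12 - 8*k*k*(a*a+b*b)) by (unfold be in HG; lra).
  assert (al < 2*k*k*(a*a+b*b)).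
  { unfold al; rewrite hc2. assert (0 < k*k*(b*b)) by (apply Rmult_lt_0_compat; nra). lra. }
  nra. }
assert (hp : p < 0) by (unfold p; lra). assert (hq : q < 0) by (unfold q; lra).
assert (Hdel : delta = (2*al*c*c + 4*a*a + 4*b*b)/8).
{ unfold delta. rewrite <- (sqrt_pow2 ((2*al*c*c + 4*a*a + 4*b*b)/8)).
  - f_equal.
    assert (T : ((2*al*c*c + 4*a*a + 4*b*b)/8)^2 - (a^4 - a^2*b^2 + b^4) =
      c*c*c*c/16*(al*al+4*be-4) + 3/4*(c*c-(a*a-b*b))*(c*c+a*a-b*b)) by (unfold al, be; field).
    rewrite HG, hc2 in T. lra.
  - unfold al. assert (0 <= k*k*(c*c)*c*c) by (repeat apply Rmult_le_pos; nra). nra. }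
assert (Hrel : 8*al*(a*a) = c*c*(12+4*al-al*al)).
{ assert (T : 8*al*(a*a) - c*c*(12+4*al-al*al) = c*c*(al*al+4*be-4) - 4*al*(c*c-(a*a-b*b)))
    by (unfold al, be; ring).
  assert (Z : c*c-(a*a-b*b) = 0) by lra. rewrite HG, Z in T. lra. }
assert (Hbe : be = 1 - al*al/4) by lra.
assert (F0 : Fgen a (b*b) c al p q be X1 (Y1*Y1) = 0).
{ replace (b*b) with (a*a-c*c) by lra. replace be with (1-al*al/4) by lra.
  replace (Y1*Y1) with (1-X1*X1) by lra. unfold p, q. apply fin_poly; auto; lra. }
clearbody delta. subst delta.
set (A2 := m*c*c). set (A1 := 2*a*(c*m - Yx)). set (B1 := -2*b*Yy). set (A0 := m*a*a - 2*c*Yx + 1).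
set (Ys := Y1*Y1).
set (f2 := ph2 p q X1 Ys). set (f1 := ph1 p q be X1 Ys). set (f0 := ph0 p q be X1 Ys).
set (g1 := q*Y1*(q*Ys - p*(X1*X1) + be)).
assert (Hpsi : forall X Y, m*((a+c*X)*(a+c*X)) - 2*((a*X+c)*Yx + b*Y*Yy) + 1 = A2*(X*X) + A1*X + B1*Y + A0)
  by (intros; unfold A2, A1, B1, A0; ring).
assert (Hphi : forall X Y, f2*(X*X) + f1*X + g1*Y + f0 =
   (p*X1*X + q*Y1*Y - be)*(p*X1*X - q*Y1*Y + q*Y1*Y1 - p*X1*X1) + q*q*(Y1*Y1)*(X*X+Y*Y-1))
  by (intros; unfold f2, f1, g1, f0, Ys, ph2, ph1, ph0; ring).
assert (P1 : f2*(X1*X1) + f1*X1 + g1*Y1 + f0 = 0) by (rewrite Hphi, c1; ring).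
assert (P2 : f2*(X2*X2) + f1*X2 + g1*Y2 + f0 = 0).
{ rewrite Hphi, c2. replace (p*X1*X2 + q*Y1*Y2 - be) with 0 by lra. ring. }
assert (P3 : f2*(X3*X3) + f1*X3 + g1*Y3 + f0 = 0).
{ rewrite Hphi, c3. replace (p*X1*X3 + q*Y1*Y3 - be) with 0 by lra. ring. }
rewrite Hpsi in l1, l2, l3.
assert (L : forall X Y, (f2*A1 - A2*f1)*X + (f2*B1 - A2*g1)*Y + (f2*A0 - A2*f0)
  = f2*(A2*(X*X)+A1*X+B1*Y+A0) - A2*(f2*(X*X)+f1*X+g1*Y+f0)) by (intros; ring).
destruct (lin_zero (f2*A1 - A2*f1) (f2*B1 - A2*g1) (f2*A0 - A2*f0) X1 Y1 X2 Y2 X3 Y3)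
  as [u0 [v0 w0]];
  [rewrite L, l1, P1; ring|rewrite L, l2, P2; ring|rewrite L, l3, P3; ring|exact hN|].
assert (hf2 : 0 < f2).
{ unfold f2, ph2, Ys. assert (0 < p*p) by nra. assert (0 < q*q) by nra.
  assert (0 <= X1*X1) by nra. assert (0 <= Y1*Y1) by nra.
  destruct (Rle_lt_dec (X1*X1) (1/2)).
  - assert (q*q*(1/2) <= q*q*(Y1*Y1)) by (apply Rmult_le_compat_l; lra).
    assert (0 <= p*p*(X1*X1)) by (apply Rmult_le_pos; lra). lra.
  - assert (p*p*(1/2) <= p*p*(X1*X1)) by (apply Rmult_le_compat_l; lra).
    assert (0 <= q*q*(Y1*Y1)) by (apply Rmult_le_pos; lra). lra. }
set (kap := A2 / f2).
assert (eA1 : A1 = kap*f1).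
{ unfold kap. apply (Rmult_eq_reg_l f2); [|lra]. replace (f2 * (A2/f2*f1)) with (A2*f1) by (field; lra). lra. }
assert (eB1 : B1 = kap*g1).
{ unfold kap. apply (Rmult_eq_reg_l f2); [|lra]. replace (f2 * (A2/f2*g1)) with (A2*g1) by (field; lra). lra. }
assert (eA0 : A0 = kap*f0).
{ unfold kap. apply (Rmult_eq_reg_l f2); [|lra]. replace (f2 * (A2/f2*f0)) with (A2*f0) by (field; lra). lra. }
assert (eA2 : A2 = kap*f2) by (unfold kap; field; lra).
assert (hac : 2*a*c <> 0) by nra.
assert (hYx : Yx = kap*(Txf a c p q be X1 Ys)/(2*a*c)).
{ unfold Txf. fold f2 f1. apply (Rmult_eq_reg_l (2*a*c)); [|exact hac].
  replace (2*a*c*(kap*(2*a*f2 - c*f1)/(2*a*c))) with (kap*(2*a*f2 - c*f1)) by (field; nra).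
  unfold A1 in eA1. unfold A2 in eA2. nsatz. }
assert (hYy : Yy = - kap*g1/(2*b)).
{ unfold B1 in eB1. apply (Rmult_eq_reg_l (2*b)); [|lra].
  replace (2*b*(- kap*g1/(2*b))) with (- (kap*g1)) by (field; lra). lra. }
assert (hkD : kap * D1f a c p q be X1 Ys = a*c*c).
{ unfold D1f. fold f2 f1 f0. unfold A0, A1, A2 in *. nsatz. }
assert (hD : D1f a c p q be X1 Ys <> 0) by (intro H0; rewrite H0, Rmult_0_r in hkD; nra).
assert (hkp : kap = a*c*c / D1f a c p q be X1 Ys) by (apply (Rmult_eq_reg_r (D1f a c p q be X1 Ys)); [rewrite hkD; field; auto|auto]).
rewrite hYx, hYy, hkp.
apply Rminus_diag_uniq.
transitivity (Fgen a (b*b) c al p q be X1 Ys / (256*b^8*(D1f a c p q be X1 Ys)^2)).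
- unfold Fgen, W64, ps1s, g1, Ys. field. repeat split; auto; lra.
- fold Ys in F0. rewrite F0. unfold Rdiv. ring.
Qed.

Lemma pdist_sym p q : pdist p q = pdist q p.
Proof. unfold pdist, dist2, dot, sub. f_equal. simpl. ring. Qed.

Lemma bis_form a b X Y X' Y' d : a <> 0 -> b <> 0 -> X*X+Y*Y = 1 -> d <> 0 ->
  / d * (a*X' - a*X) * (a*X / a^2) + / d * (b*Y' - b*Y) * (b*Y / b^2) = - (1 - X*X' - Y*Y') / d.
Proof. intros ha hb hc hd.
  assert (E1 : (a*X'-a*X)*(a*X/a^2) + (b*Y'-b*Y)*(b*Y/b^2) = X*X' - X*X + (Y*Y' - Y*Y)) by (field; auto).
  transitivity (/d * ((a*X'-a*X)*(a*X/a^2) + (b*Y'-b*Y)*(b*Y/b^2))); [ring|].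
  rewrite E1. replace (X*X) with (1 - Y*Y) by lra. field. auto. Qed.

Lemma Dform a b c Xi Yi Xj Yj : c*c = a*a-b*b -> Xi*Xi+Yi*Yi=1 -> Xj*Xj+Yj*Yj=1 ->
 (a*Xi - a*Xj)*(a*Xi - a*Xj) + (b*Yi - b*Yj)*(b*Yi - b*Yj)
 = (1 - Xi*Xj - Yi*Yj)*((a*a+b*b) - c*c*(Xi*Xj - Yi*Yj)).
Proof. intros. nsatz. Qed.

Lemma focal_sq a b c X Y : c*c = a*a-b*b -> X*X+Y*Y = 1 ->
  (a*X - -c)*(a*X - -c) + (b*Y - 0)*(b*Y - 0) = (a+c*X)*(a+c*X).
Proof. intros hc2 hxy.
 assert (T: (a*X - -c)*(a*X - -c) + (b*Y - 0)*(b*Y - 0) - (a+c*X)*(a+c*X) = b*b*(X*X+Y*Y-1) + (a*a-b*b-c*c)*(X*X-1)) by ring.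
 rewrite hxy in T. replace (a*a-b*b-c*c) with 0 in T by lra. lra. Qed.

Lemma focal a b c X Y : 0 < b -> b < a -> 0 < c -> c*c = a*a-b*b -> X*X+Y*Y = 1 ->
  pdist (a*X, b*Y) (-c, 0) = a + c*X.
Proof.
intros hb hab hc hc2 hxy. unfold pdist, dist2, dot, sub; simpl.
assert (hca : c < a) by nra.
assert (hX : -1 <= X <= 1) by (split; nra).
rewrite <- (sqrt_pow2 (a+c*X)) by nra. f_equal. replace ((a+c*X)^2) with ((a+c*X)*(a+c*X)) by ring. apply focal_sq; auto.
Qed.

Lemma inv_lin a b c rho X Y Xx Xy r2 :
 0 < b -> b < a -> 0 < c -> c*c = a*a-b*b -> 0 < rho -> X*X+Y*Y = 1 ->
 dist2 (Xx,Xy) (inversion (-c,0) rho (a*X,b*Y)) = r2 ->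
 ( ((Xx+c)/rho^2)*((Xx+c)/rho^2) + (Xy/rho^2)*(Xy/rho^2) - r2/rho^4 ) * ((a+c*X)*(a+c*X))
   - 2*((a*X+c)*((Xx+c)/rho^2) + b*Y*(Xy/rho^2)) + 1 = 0.
Proof.
intros hb hab hc hc2 hr hxy H. unfold inversion in H. rewrite (focal a b c X Y) in H by auto.
unfold dist2, dot, sub, add, scal in H; simpl in H. subst r2.
assert (hca : c < a) by nra.
assert (hX : -1 <= X <= 1) by (split; nra).
assert (hs : 0 < a + c*X) by nra.
assert (Hs : (a*X - -c)*(a*X - -c) + (b*Y - 0)*(b*Y - 0) = (a+c*X)*(a+c*X)) by (apply focal_sq; auto).
match goal with |- ?L = 0 =>
  assert (HL : L = ((a+c*X)*(a+c*X) - ((a*X - -c)*(a*X - -c) + (b*Y - 0)*(b*Y - 0)))/((a+c*X)*(a+c*X)))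
  by (field; split; lra) end.
rewrite HL, Hs. unfold Rdiv. ring.
Qed.

Lemma pair_B a b c k Xi Yi Xj Yj d : c*c = a*a-b*b -> Xi*Xi+Yi*Yi = 1 -> Xj*Xj+Yj*Yj = 1 ->
  d*d = (a*Xi - a*Xj)*(a*Xi - a*Xj) + (b*Yi - b*Yj)*(b*Yi - b*Yj) ->
  1 - Xi*Xj - Yi*Yj = k*d -> 1 - Xi*Xj - Yi*Yj <> 0 ->
  (2*k*k*(c*c) - 2)*Xi*Xj + (-(2*k*k*(c*c)) - 2)*Yi*Yj = 2*k*k*(a*a+b*b) - 2.
Proof.
intros hc2 ci cj hd hg hg0. rewrite (Dform a b c Xi Yi Xj Yj hc2 ci cj) in hd.
set (g := 1 - Xi*Xj - Yi*Yj) in *.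
assert (H : g*(g - k*k*((a*a+b*b) - c*c*(Xi*Xj - Yi*Yj))) = 0).
{ assert (g*g = k*k*(d*d)) by (rewrite hg; ring). rewrite hd in H. lra. }
apply Rmult_integral in H. destruct H as [H|H]; [contradiction|].
unfold g in H. lra.
Qed.

Lemma sqnn x : 0 <= x*x.
Proof. pose proof (Rle_0_sqr x). unfold Rsqr in H. exact H. Qed.

Lemma dist2_nonneg p q : 0 <= dist2 p q.
Proof. unfold dist2, dot. nra. Qed.

Lemma uv_le1 Xi Yi Xj Yj : Xi*Xi+Yi*Yi = 1 -> Xj*Xj+Yj*Yj = 1 -> Xi*Xj - Yi*Yj <= 1.
Proof. intros ci cj.
 assert (T : (Xi-Xj)*(Xi-Xj) + (Yi+Yj)*(Yi+Yj) = (Xi*Xi+Yi*Yi) + (Xj*Xj+Yj*Yj) - 2*(Xi*Xj - Yi*Yj)) by ring.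
 rewrite ci, cj in T. pose proof (sqnn (Xi-Xj)). pose proof (sqnn (Yi+Yj)). lra. Qed.

Lemma g_pos Xi Yi Xj Yj : Xi*Xi+Yi*Yi = 1 -> Xj*Xj+Yj*Yj = 1 -> (Xi <> Xj \/ Yi <> Yj) ->
  0 < 1 - Xi*Xj - Yi*Yj.
Proof. intros ci cj hne.
 assert (E : 2*(1 - Xi*Xj - Yi*Yj) = (Xi-Xj)*(Xi-Xj) + (Yi-Yj)*(Yi-Yj)).
 { assert (T : (Xi-Xj)*(Xi-Xj) + (Yi-Yj)*(Yi-Yj) = (Xi*Xi+Yi*Yi) + (Xj*Xj+Yj*Yj) - 2*(Xi*Xj + Yi*Yj)) by ring.
   rewrite ci, cj in T. lra. }
 destruct hne as [h|h].
 - assert (0 < (Xi-Xj)*(Xi-Xj)) by (apply Rsqr_pos_lt; lra). nra.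
 - assert (0 < (Yi-Yj)*(Yi-Yj)) by (apply Rsqr_pos_lt; lra). nra.
Qed.


Theorem mainTheorem12 :
  forall (a b rho : R) (P1 P2 P3 X : pt),
    0 < b -> b < a -> 0 < rho ->
    three_periodic a b P1 P2 P3 ->
    let c := sqrt (a^2 - b^2) in
    let delta := sqrt (a^4 - a^2 * b^2 + b^4) in
    let f1 : pt := (- c, 0) in
    is_circumcenter X (inversion f1 rho P1) (inversion f1 rho P2) (inversion f1 rho P3) ->
    pdist X (- c * (1 + rho^2 * (a^2 + b^2) / (2 * b^4)), 0)
    = rho^2 * (a * (delta - b^2) / (2 * b^4)).
Proof.
intros a b rho P1 P2 P3 X hb hab hrho H3 c delta f1 HX.
assert (Hcdef : c = sqrt (a^2 - b^2)) by reflexivity.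
assert (Hddef : delta = sqrt (a^4 - a^2 * b^2 + b^4)) by reflexivity.
subst f1. clearbody c delta.
assert (ha : 0 < a) by lra.
assert (hc2 : c*c = a*a - b*b) by (rewrite Hcdef, sqrt_sqrt; [ring|nra]).
assert (hc : 0 < c) by (rewrite Hcdef; apply sqrt_lt_R0; nra).
destruct P1 as [x1 y1], P2 as [x2 y2], P3 as [x3 y3], X as [Xx Xy].
destruct H3 as [e1 [e2 [e3 [nc [nb1 [nb2 nb3]]]]]].
assert (exists X1, x1 = a*X1) as [X1 ->] by (exists (x1/a); field; lra).
assert (exists X2, x2 = a*X2) as [X2 ->] by (exists (x2/a); field; lra).
assert (exists X3, x3 = a*X3) as [X3 ->] by (exists (x3/a); field; lra).
assert (exists Y1, y1 = b*Y1) as [Y1 ->] by (exists (y1/b); field; lra).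
assert (exists Y2, y2 = b*Y2) as [Y2 ->] by (exists (y2/b); field; lra).
assert (exists Y3, y3 = b*Y3) as [Y3 ->] by (exists (y3/b); field; lra).
unfold on_ellipse in e1, e2, e3; cbn [fst snd] in e1, e2, e3.
assert (c1 : X1*X1+Y1*Y1 = 1) by (rewrite <- e1; field; lra).
assert (c2 : X2*X2+Y2*Y2 = 1) by (rewrite <- e2; field; lra).
assert (c3 : X3*X3+Y3*Y3 = 1) by (rewrite <- e3; field; lra).
unfold noncollinear in nc; cbn [fst snd] in nc.
assert (hN : (X2-X1)*(Y3-Y1) - (Y2-Y1)*(X3-X1) <> 0).
{ intro H. apply nc. transitivity (a*b*((X2-X1)*(Y3-Y1) - (Y2-Y1)*(X3-X1))); [ring|rewrite H; ring]. }
assert (n12 : X2 <> X1 \/ Y2 <> Y1).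
{ destruct (Req_dec X2 X1); [right|left; auto]. intro. subst. apply hN. ring. }
assert (n13 : X3 <> X1 \/ Y3 <> Y1).
{ destruct (Req_dec X3 X1); [right|left; auto]. intro. subst. apply hN. ring. }
assert (n23 : X3 <> X2 \/ Y3 <> Y2).
{ destruct (Req_dec X3 X2); [right|left; auto]. intro. subst. apply hN. ring. }
assert (g21 := g_pos X2 Y2 X1 Y1 c2 c1 n12).
assert (g31 := g_pos X3 Y3 X1 Y1 c3 c1 n13).
assert (g32 := g_pos X3 Y3 X2 Y2 c3 c2 n23).
assert (Hd : forall Xi Yi Xj Yj, Xi*Xi+Yi*Yi = 1 -> Xj*Xj+Yj*Yj = 1 -> 0 < 1 - Xi*Xj - Yi*Yj ->
  0 < pdist (a*Xi, b*Yi) (a*Xj, b*Yj) /\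
  pdist (a*Xi, b*Yi) (a*Xj, b*Yj) * pdist (a*Xi, b*Yi) (a*Xj, b*Yj) =
   (a*Xi - a*Xj)*(a*Xi - a*Xj) + (b*Yi - b*Yj)*(b*Yi - b*Yj)).
{ intros Xi Yi Xj Yj ci cj gp.
  assert (HD : (a*Xi - a*Xj)*(a*Xi - a*Xj) + (b*Yi - b*Yj)*(b*Yi - b*Yj) > 0).
  { rewrite (Dform a b c Xi Yi Xj Yj hc2 ci cj). apply Rmult_lt_0_compat; auto.
    assert (Xi*Xj - Yi*Yj <= 1) by (apply uv_le1; auto).
    assert (c*c*(Xi*Xj - Yi*Yj) <= c*c) by (rewrite <- (Rmult_1_r (c*c)) at 2; apply Rmult_le_compat_l; [apply sqnn|auto]).
    assert (0 < b*b) by (apply Rmult_lt_0_compat; lra). lra. }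
  unfold pdist, dist2, dot, sub; cbn [fst snd]. split.
  - apply sqrt_lt_R0. lra.
  - apply sqrt_sqrt. lra. }
destruct (Hd X2 Y2 X1 Y1 c2 c1 g21) as [d21p d21s].
destruct (Hd X3 Y3 X1 Y1 c3 c1 g31) as [d31p d31s].
destruct (Hd X3 Y3 X2 Y2 c3 c2 g32) as [d32p d32s].
unfold normal_bisects in nb1, nb2, nb3.
rewrite (pdist_sym (a*X1, b*Y1) (a*X2, b*Y2)) in nb2.
rewrite (pdist_sym (a*X2, b*Y2) (a*X3, b*Y3)), (pdist_sym (a*X1, b*Y1) (a*X3, b*Y3)) in nb3.
set (d21 := pdist (a*X2, b*Y2) (a*X1, b*Y1)) in *.
set (d31 := pdist (a*X3, b*Y3) (a*X1, b*Y1)) in *.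
set (d32 := pdist (a*X3, b*Y3) (a*X2, b*Y2)) in *.
unfold normal_bisects, dot, scal, sub, ell_normal in nb1, nb2, nb3; cbn [fst snd] in nb1, nb2, nb3.
assert (ha0 : a <> 0) by lra. assert (hb0 : b <> 0) by lra.
rewrite (bis_form a b X1 Y1 X3 Y3 d31), (bis_form a b X1 Y1 X2 Y2 d21) in nb1 by (auto; lra).
rewrite (bis_form a b X2 Y2 X1 Y1 d21), (bis_form a b X2 Y2 X3 Y3 d32) in nb2 by (auto; lra).
rewrite (bis_form a b X3 Y3 X2 Y2 d32), (bis_form a b X3 Y3 X1 Y1 d31) in nb3 by (auto; lra).
set (k := (1 - X2*X1 - Y2*Y1)/d21).
assert (hk : 0 < k) by (unfold k; apply Rdiv_lt_0_compat; auto).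
assert (k21 : 1 - X2*X1 - Y2*Y1 = k*d21) by (unfold k; field; lra).
assert (E1 : (1 - X1*X3 - Y1*Y3)/d31 = (1 - X1*X2 - Y1*Y2)/d21) by lra.
assert (E2 : (1 - X2*X3 - Y2*Y3)/d32 = (1 - X2*X1 - Y2*Y1)/d21) by lra.
assert (k31 : 1 - X3*X1 - Y3*Y1 = k*d31).
{ unfold k. replace (1 - X3*X1 - Y3*Y1) with ((1 - X1*X3 - Y1*Y3)/d31 * d31) by (field; lra).
  rewrite E1. replace (X1*X2) with (X2*X1) by ring. replace (Y1*Y2) with (Y2*Y1) by ring. field; lra. }
assert (k32 : 1 - X3*X2 - Y3*Y2 = k*d32).
{ unfold k. replace (1 - X3*X2 - Y3*Y2) with ((1 - X2*X3 - Y2*Y3)/d32 * d32) by (field; lra).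
  rewrite E2. field; lra. }
assert (b12 := pair_B a b c k X2 Y2 X1 Y1 d21 hc2 c2 c1 d21s k21 ltac:(lra)).
assert (b13 := pair_B a b c k X3 Y3 X1 Y1 d31 hc2 c3 c1 d31s k31 ltac:(lra)).
assert (b23 := pair_B a b c k X3 Y3 X2 Y2 d32 hc2 c3 c2 d32s k32 ltac:(lra)).
assert (b12' : (2*k*k*(c*c) - 2)*X1*X2 + (-(2*k*k*(c*c)) - 2)*Y1*Y2 = 2*k*k*(a*a+b*b) - 2) by lra.
assert (b13' : (2*k*k*(c*c) - 2)*X1*X3 + (-(2*k*k*(c*c)) - 2)*Y1*Y3 = 2*k*k*(a*a+b*b) - 2) by lra.
assert (b23' : (2*k*k*(c*c) - 2)*X2*X3 + (-(2*k*k*(c*c)) - 2)*Y2*Y3 = 2*k*k*(a*a+b*b) - 2) by lra.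
unfold is_circumcenter, pdist in HX. destruct HX as [h12 h23].
apply sqrt_inj in h12; [|apply dist2_nonneg|apply dist2_nonneg].
apply sqrt_inj in h23; [|apply dist2_nonneg|apply dist2_nonneg].
set (r2 := dist2 (Xx,Xy) (inversion (-c,0) rho (a*X1,b*Y1))) in *.
assert (l1 := inv_lin a b c rho X1 Y1 Xx Xy r2 hb hab hc hc2 hrho c1 eq_refl).
assert (l2 := inv_lin a b c rho X2 Y2 Xx Xy r2 hb hab hc hc2 hrho c2 (eq_sym h12)).
assert (l3 := inv_lin a b c rho X3 Y3 Xx Xy r2 hb hab hc hc2 hrho c3 ltac:(rewrite <- h23; auto)).
assert (HC := core_main a b c k X1 Y1 X2 Y2 X3 Y3
   (((Xx+c)/rho^2)*((Xx+c)/rho^2) + (Xy/rho^2)*(Xy/rho^2) - r2/rho^4) ((Xx+c)/rho^2) (Xy/rho^2)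
   hb hab hc hc2 hk c1 c2 c3 hN b12' b13' b23' l1 l2 l3).
cbv zeta in HC. rewrite <- Hddef in HC.
clear - HC hb hab hrho Hddef.
assert (hdel : b^2 <= delta).
{ rewrite Hddef. rewrite <- (sqrt_pow2 (b^2)) at 1 by (apply pow2_ge_0). apply sqrt_le_1_alt.
  assert (0 <= a^2*(a^2-b^2)) by (apply Rmult_le_pos; [apply pow2_ge_0|replace (a^2-b^2) with ((a-b)*(a+b)) by ring; apply Rmult_le_pos; lra]).
  assert (T: a^4 - a^2*b^2 + b^4 - (b^2)^2 = a^2*(a^2-b^2)) by ring. lra. }
unfold pdist, dist2, dot, sub; cbn [fst snd].
rewrite <- (sqrt_pow2 (rho^2*(a*(delta-b^2)/(2*b^4)))).
2:{ apply Rmult_le_pos; [nra|]. apply Rmult_le_pos; [nra|]. apply Rlt_le, Rinv_0_lt_compat. apply Rmult_lt_0_compat; [lra|apply pow_lt; lra]. }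
f_equal.
set (Yx := (Xx+c)/rho^2) in *. set (Yy := Xy/rho^2) in *.
assert (hXx : Xx = rho^2*Yx - c) by (unfold Yx; field; lra).
assert (hXy : Xy = rho^2*Yy) by (unfold Yy; field; lra).
rewrite hXx, hXy.
transitivity (rho^2*rho^2*((Yx - - c * (a ^ 2 + b ^ 2) / (2 * b ^ 4)) * (Yx - - c * (a ^ 2 + b ^ 2) / (2 * b ^ 4)) + Yy * Yy)).
- field. lra.
- rewrite HC. field. lra.
Qed.
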